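(* Let $A\subseteq\mathbb{N}$ be infinite and coinfinite and let $Q=\{A\}$, a quantifier of type $\langle 1\rangle$ (note $Q=Q_A\cap Q^A$). Then $\mathrm{Aut}(Q)=\{g\in S_\infty: g(A)=A\}$, and every subset of $\mathbb{N}$ defined by an $\mathscr{L}_{\omega_1\omega}(Q)$-formula $\varphi(x,c_0,\dots,c_{t})$ with parameters $c_i\in\{0,\dots,t\}$ is either a subset of $\{0,\dots,t\}$ or contains $\mathbb{N}\setminus\{0,\dots,t\}$. In particular the orbits of $\mathrm{Aut}(Q)$ (e.g. the set $A$, which is the orbit of any element of $A$) are not all definable in $\mathscr{L}_{\omega_1\omega}(Q)$.
   Context: A quantifier of type $\langle k\rangle$ on $\mathbb{N}$ is a family of subsets of $\mathbb{N}^k$. For $A\subseteq\mathbb{N}^k$, $Q_A=\{X\subseteq\mathbb{N}^k:A\subseteq X\}$ and $Q^A=\{X\subseteq\mathbb{N}^k:X\subseteq A\}$. A permutation $f$ of $\mathbb{N}$ fixes $Q$ if $B\in Q\iff f(B)\in Q$ for all $B$; $\mathrm{Aut}(Q)$ is the group of such permutations. $\mathscr{L}_{\omega_1\omega}(Q)$ extends $\mathscr{L}_{\omega_1\omega}$ (countable conjunctions/disjunctions, finite quantifier strings) by formulas $Qx\,\varphi(x,y)$ with $\mathbb{N}\models Qx\,\varphi(x,b)$ iff $\{a:\mathbb{N}\models\varphi(a,b)\}\in Q$; formulas have no non-logical symbols besides $Q$. A set $B\subseteq\mathbb{N}^n$ is definable in $\mathscr{L}_{\omega_1\omega}(Q)$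 if there is a parameter-free formula $\varphi(x_1,\ldots,x_n)$ with $b\in B\iff\mathbb{N}\models\varphi(b)$. *)

(* Defs.v *)
From Stdlib Require Import Arith List.
Import ListNotations.

Definition finite_set (B : nat -> Prop) : Prop :=
  exists l : list nat, forall n, B n -> In n l.
Definition infinite_set (B : nat -> Prop) : Prop := ~ finite_set B.
Definition coinfinite_set (B : nat -> Prop) : Prop :=
  infinite_set (fun n => ~ B n).

Definition quantifier1 := (nat -> Prop) -> Prop.

(* Q_A = {X : A ⊆ X},  Q^A = {X : X ⊆ A},  {A} = {X : X = A} (extensional) *)
Definition Q_lower (A : nat -> Prop) : quantifier1 :=
  fun X => forall n, A n -> X n.
Definition Q_upper (A : nat -> Prop) : quantifier1 :=
  fun X => forall n, X n -> A n.
Definition Q_single (A : nat -> Prop) : quantifier1 :=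
  fun X => forall n, X n <-> A n.

Definition bijective_nat (g : nat -> nat) : Prop :=
  (forall x y, g x = g y -> x = y) /\ (forall y, exists x, g x = y).
Definition image (g : nat -> nat) (B : nat -> Prop) : nat -> Prop :=
  fun y => exists x, B x /\ g x = y.
Definition fixes (Q : quantifier1) (g : nat -> nat) : Prop :=
  forall B : nat -> Prop, Q B <-> Q (image g B).
Definition Aut (Q : quantifier1) (g : nat -> nat) : Prop :=
  bijective_nat g /\ fixes Q g.

(* Syntax of L_{omega_1 omega}(Q): variables are natural numbers, the only
   atomic formulas are equalities, countable conjunctions/disjunctions are
   indexed by nat (finite ones by repetition). *)
Inductive formula : Type :=
| FEq : nat -> nat -> formula
| FNot : formula -> formula
| FAnd : (nat -> formula) -> formula
| FOr : (nat -> formula) -> formula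
| FExists : nat -> formula -> formula
| FForall : nat -> formula -> formula
| FQ : nat -> formula -> formula.

Definition update (rho : nat -> nat) (x a : nat) : nat -> nat :=
  fun y => if Nat.eqb y x then a else rho y.

Fixpoint sat (Q : quantifier1) (rho : nat -> nat) (phi : formula) : Prop :=
  match phi with
  | FEq i j => rho i = rho j
  | FNot p => ~ sat Q rho p
  | FAnd ps => forall k, sat Q rho (ps k)
  | FOr ps => exists k, sat Q rho (ps k)
  | FExists x p => exists a, sat Q (update rho x a) p
  | FForall x p => forall a, sat Q (update rho x a) p
  | FQ x p => Q (fun a => sat Q (update rho x a) p)
  end.

(* B ⊆ N is definable (parameter-free) by phi with free variable x:
   the truth of phi depends only on the value of x, and equals membership in B. *)
Definition definable (Q : quantifier1) (B : nat -> Prop) : Prop :=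
  exists (phi : formula) (x : nat), forall rho, sat Q rho phi <-> B (rho x).

(* Main.v *)
Require Import Defs.
From Stdlib Require Import Arith List Lia Classical FunctionalExtensionality.
Import ListNotations.

Definition sw (u v n : nat) : nat :=
  if Nat.eqb n u then v else if Nat.eqb n v then u else n.

Lemma sw_invol u v n : sw u v (sw u v n) = n.
Proof.
  unfold sw.
  destruct (Nat.eqb_spec n u) as [->|H1].
  - destruct (Nat.eqb_spec v u) as [->|H2]; auto.
    rewrite Nat.eqb_refl. auto.
  - destruct (Nat.eqb_spec n v) as [->|H3].
    + rewrite Nat.eqb_refl. auto.
    + apply Nat.eqb_neq in H1. apply Nat.eqb_neq in H3. rewrite H1, H3. auto.
Qed.

Lemma sw_fix u v n : n <> u -> n <> v -> sw u v n = n.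
Proof. intros. unfold sw. destruct (Nat.eqb_spec n u); destruct (Nat.eqb_spec n v); lia. Qed.

Lemma sw_le u v n : sw u v n <= max n (max u v).
Proof. unfold sw. destruct (Nat.eqb_spec n u); destruct (Nat.eqb_spec n v); lia. Qed.

Lemma sw_update u v rho y a :
  (fun w => sw u v (update rho y a w)) = update (fun w => sw u v (rho w)) y (sw u v a).
Proof.
  apply functional_extensionality; intro w. unfold update. destruct (Nat.eqb w y); auto.
Qed.

Definition bnd (rho : nat -> nat) N := forall w, rho w <= N.

Lemma bnd_update rho N y a : bnd rho N -> bnd (update rho y a) (max N a).
Proof. intros H w. unfold update. destruct (Nat.eqb w y); [lia| specialize (H w); lia]. Qed.

Lemma bnd_sw rho N u v : bnd rho N -> bnd (fun w => sw u v (rho w)) (max N (max u v)).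
Proof. intros H w. pose proof (sw_le u v (rho w)). specialize (H w). lia. Qed.

Lemma fin_bounded (P : nat -> Prop) N : (forall n, P n -> n <= N) -> finite_set P.
Proof.
  intros H. exists (seq 0 (S N)). intros n Hn. apply in_seq. specialize (H n Hn). lia.
Qed.

Lemma noQ (A : nat -> Prop) (hinf : infinite_set A) (hcoinf : coinfinite_set A)
  (D : nat -> Prop) N :
  (forall a b, N < a -> N < b -> D a -> D b) -> ~ Q_single A D.
Proof.
  intros HD HQ. destruct (classic (D (S N))) as [H|H].
  - apply hcoinf. apply (fin_bounded _ N). intros n Hn.
    destruct (le_gt_dec n N); auto. exfalso. apply Hn. apply HQ.
    apply (HD (S N)); auto; lia.
  - apply hinf. apply (fin_bounded _ N). intros n Hn.
    destruct (le_gt_dec n N); auto. exfalso. apply H. apply HQ in Hn.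
    apply (HD n); auto; lia.
Qed.

Lemma key (A : nat -> Prop) (hinf : infinite_set A) (hcoinf : coinfinite_set A) :
  forall phi rho N, bnd rho N -> forall u v,
    sat (Q_single A) rho phi <-> sat (Q_single A) (fun w => sw u v (rho w)) phi.
Proof.
  induction phi as [i j|p IH|ps IH|ps IH|y p IH|y p IH|y p IH];
    intros rho N HN u v; simpl.
  - split; intro E. now rewrite E.
    rewrite <- (sw_invol u v (rho i)), <- (sw_invol u v (rho j)). now rewrite E.
  - rewrite (IH rho N HN u v). tauto.
  - split; intros H k; [apply (IH k rho N HN u v) | apply (IH k rho N HN u v)]; auto.
  - split; intros [k H]; exists k; [apply (IH k rho N HN u v) | apply (IH k rho N HN u v)]; auto.
  - split; intros [a H].
    + exists (sw u v a). rewrite <- sw_update. apply (IH _ _ (bnd_update rho N y a HN)); auto.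
    + exists (sw u v a). apply (IH _ _ (bnd_update rho N y (sw u v a) HN) u v).
      rewrite sw_update, sw_invol. auto.
  - split; intros H a.
    + rewrite <- (sw_invol u v a), <- sw_update.
      apply (IH _ _ (bnd_update rho N y (sw u v a) HN)); auto.
    + apply (IH _ _ (bnd_update rho N y a HN) u v). rewrite sw_update. auto.
  - assert (G : forall rho N, bnd rho N -> ~ Q_single A (fun a => sat (Q_single A) (update rho y a) p)).
    { intros r M HM. apply (noQ A hinf hcoinf _ M). intros a b Ha Hb Da.
      assert (E : update r y b = fun w => sw a b (update r y a w)).
      { apply functional_extensionality; intro w. unfold update.
        destruct (Nat.eqb w y). unfold sw. rewrite Nat.eqb_refl. auto.
        specialize (HM w). rewrite sw_fix; lia. }
      rewrite E. apply (IH _ _ (bnd_update r M y a HM)). auto. }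
    split; intro H; exfalso.
    + exact (G rho N HN H).
    + exact (G _ _ (bnd_sw rho N u v HN) H).
Qed.

Lemma part3 (A : nat -> Prop) (hinf : infinite_set A) (hcoinf : coinfinite_set A) :
  forall (phi : formula) (x t : nat) (rho : nat -> nat),
     (forall w, w <> x -> rho w <= t) ->
     let B := fun a => sat (Q_single A) (update rho x a) phi in
     (forall a, B a -> a <= t) \/ (forall a, t < a -> B a).
Proof.
  intros phi x t rho Hr B.
  assert (HB : forall a b, t < a -> t < b -> B a -> B b).
  { intros a b Ha Hb Da. unfold B in *.
    assert (E : update rho x b = fun w => sw a b (update rho x a w)).
    { apply functional_extensionality; intro w. unfold update.
      destruct (Nat.eqb_spec w x). unfold sw. rewrite Nat.eqb_refl. auto.
      specialize (Hr w n). rewrite sw_fix; lia. }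
    assert (Hbd : bnd (update rho x a) (max t a)).
    { intro w. unfold update. destruct (Nat.eqb_spec w x). lia. specialize (Hr w n). lia. }
    rewrite E. apply (key A hinf hcoinf _ _ _ Hbd). auto. }
  destruct (classic (B (S t))) as [H|H].
  - right. intros a Ha. apply (HB (S t)); auto; lia.
  - left. intros a Ha. destruct (le_gt_dec a t); auto. exfalso. apply H.
    apply (HB a); auto; lia.
Qed.

Lemma part2 (A : nat -> Prop) g : bijective_nat g ->
     (fixes (Q_single A) g <-> (forall y, image g A y <-> A y)).
Proof.
  intros [Hinj Hsurj]. split.
  - intros F. apply (F A). intro n; tauto.
  - intros H B. unfold Q_single. split.
    + intros HB y. rewrite <- H. unfold image. split; intros [z [Hz E]]; exists z; split; auto; apply HB; auto.
    + intros HB n. split; intro Hn.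
      * assert (I : image g B (g n)) by (exists n; auto).
        apply HB, H in I. destruct I as [z [Hz E]]. apply Hinj in E. subst; auto.
      * assert (I : image g A (g n)) by (exists n; auto).
        apply H, HB in I. destruct I as [z [Hz E]]. apply Hinj in E. subst; auto.
Qed.

Theorem mainTheorem11 (A : nat -> Prop)
  (hinf : infinite_set A) (hcoinf : coinfinite_set A) :
  (* Q = {A} = Q_A ∩ Q^A *)
  (forall X, Q_single A X <-> (Q_lower A X /\ Q_upper A X)) /\
  (* Aut(Q) = {g ∈ S_inf : g(A) = A} *)
  (forall g, bijective_nat g ->
     (fixes (Q_single A) g <-> (forall y, image g A y <-> A y))) /\
  (* sets defined with parameters from {0,...,t} *)
  (forall (phi : formula) (x t : nat) (rho : nat -> nat),
     (forall w, w <> x -> rho w <= t) ->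
     let B := fun a => sat (Q_single A) (update rho x a) phi in
     (forall a, B a -> a <= t) \/ (forall a, t < a -> B a)) /\
  (* A is an orbit of Aut(Q), yet not definable *)
  (forall a, A a -> forall b,
     (exists g, Aut (Q_single A) g /\ g a = b) <-> A b) /\
  ~ definable (Q_single A) A.
Proof.
  split; [|split; [|split; [|split]]].
  - intro X. unfold Q_single, Q_lower, Q_upper. firstorder.
  - apply part2.
  - apply part3; auto.
  - intros a Ha b. split.
    + intros [g [[Hbij Hf] E]]. pose proof (proj1 (part2 A g Hbij) Hf) as Hf2. apply Hf2. exists a; auto.
    + intros Hb. exists (sw a b). split; [split|].
      * split. intros x y E. rewrite <- (sw_invol a b x), E. apply sw_invol.
        intro y. exists (sw a b y). apply sw_invol.
      * assert (Hbij : bijective_nat (sw a b)).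
        { split. intros x y E. rewrite <- (sw_invol a b x), E. apply sw_invol.
          intro y. exists (sw a b y). apply sw_invol. }
        apply (part2 A _ Hbij).
        assert (K : forall z, A z -> A (sw a b z)).
        { intros z Hz. unfold sw. destruct (Nat.eqb z a); auto. destruct (Nat.eqb z b); auto. }
        intro y. split.
        -- intros [z [Hz E]]. subst. auto.
        -- intro Hy. exists (sw a b y). split; auto. apply sw_invol.
      * unfold sw. rewrite Nat.eqb_refl. auto.
  - intros [phi [x Hd]].
    destruct (part3 A hinf hcoinf phi x 0 (fun _ => 0)) as [H|H].
    + intros; lia.
    + apply hinf. apply (fin_bounded _ 0). intros n Hn. apply H.
      apply Hd. unfold update. rewrite Nat.eqb_refl. auto.
    + apply hcoinf. apply (fin_bounded _ 0). intros n Hn.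
      destruct (le_gt_dec n 0); auto. exfalso. apply Hn.
      specialize (H n g). apply Hd in H. unfold update in H. rewrite Nat.eqb_refl in H. auto.
Qed.
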